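(* Let $V$ and $Q$ be complex Hilbert spaces, $A\in L(V,V^* )$, $B\in L(V,Q^* )$, with associated sesquilinear forms $a(u,v)=\langle Au,v\rangle$ and $b(v,q)=\langle Bv,q\rangle$. Assume $\|a\|<\infty$ and $\alpha>0$, where $\|a\|$ and $\alpha$ are as defined in the context. Let $V_0=\ker B$, $V_1=V_0^\perp$ and let $A_{ij}\in L(V_j,V_i^* )$, $i,j\in\{0,1\}$, be defined by $\langle A_{ij}u,v\rangle=a(u,v)$ for all $u\in V_j$, $v\in V_i$ (so $A_{00}$ is an isomorphism from $V_0$ onto $V_0^*$). Then \[ \|A_{10}A_{00}^{-1}\|_{L(V_0^*,V_1^* )}\le\sqrt{\frac{\|a\|^2}{\alpha^2}-1},\qquad \|A_{00}^{-1}A_{01}\|_{L(V_1,V_0)}\le\sqrt{\frac{\|a\|^2}{\alpha^2}-1}, \] and \[ \|A_{11}-A_{10}A_{00}^{-1}A_{01}\|_{L(V_1,V_1^* )}\le\frac{\|a\|^2}{\alpha}. \]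
   Context: For a complex Hilbert space $H$, $H^*$ denotes the space of bounded antilinear functionals on $H$, $\langle\cdot,\cdot\rangle$ the duality pairing, and $L(H_1,H_2)$ the bounded linear operators. $V_0$, $V_1$ carry the inner product of $V$, and $V_i^*$ the corresponding dual norms. Definitions: $\|a\|=\sup_{0\ne u\in V}\sup_{0\ne v\in V}\frac{|a(u,v)|}{\|u\|_V\|v\|_V}$, $\alpha=\inf_{0\ne u\in\ker B}\sup_{0\ne v\in\ker B}\frac{|a(u,v)|}{\|u\|_V\|v\|_V}=\inf_{0\ne v\in\ker B}\sup_{0\ne u\in\ker B}\frac{|a(u,v)|}{\|u\|_V\|v\|_V}$ (both infima are assumed equal and positive). *)

(* Defs.v *)
From Stdlib Require Import Reals.
Open Scope R_scope.

Record Cx := mkC { Re : R; Im : R }.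
Definition C0 : Cx := mkC 0 0.
Definition C1 : Cx := mkC 1 0.
Definition Cadd (x y : Cx) : Cx := mkC (Re x + Re y) (Im x + Im y).
Definition Copp (x : Cx) : Cx := mkC (- Re x) (- Im x).
Definition Csub (x y : Cx) : Cx := Cadd x (Copp y).
Definition Cmul (x y : Cx) : Cx :=
  mkC (Re x * Re y - Im x * Im y) (Re x * Im y + Im x * Re y).
Definition Cconj (x : Cx) : Cx := mkC (Re x) (- Im x).
Definition Cmod (x : Cx) : R := sqrt (Re x ^ 2 + Im x ^ 2).

(** * Complex Hilbert spaces (inner product linear in the first argument,
      antilinear in the second, complete for the induced norm) *)
Record HilbertSpace := {
  carrier :> Type;
  hzero : carrier;
  hadd : carrier -> carrier -> carrier;
  hopp : carrier -> carrier;
  hscal : Cx -> carrier -> carrier;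
  hinner : carrier -> carrier -> Cx;
  hadd_assoc : forall x y z, hadd x (hadd y z) = hadd (hadd x y) z;
  hadd_comm : forall x y, hadd x y = hadd y x;
  hadd_0 : forall x, hadd x hzero = x;
  hadd_opp : forall x, hadd x (hopp x) = hzero;
  hscal_1 : forall x, hscal C1 x = x;
  hscal_assoc : forall a b x, hscal a (hscal b x) = hscal (Cmul a b) x;
  hscal_addv : forall a x y, hscal a (hadd x y) = hadd (hscal a x) (hscal a y);
  hscal_adds : forall a b x, hscal (Cadd a b) x = hadd (hscal a x) (hscal b x);
  hinner_add : forall x y z, hinner (hadd x y) z = Cadd (hinner x z) (hinner y z);
  hinner_scal : forall a x y, hinner (hscal a x) y = Cmul a (hinner x y);
  hinner_sym : forall x y, hinner x y = Cconj (hinner y x);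
  hinner_pos : forall x, 0 <= Re (hinner x x);
  hinner_def : forall x, hinner x x = C0 -> x = hzero;
  hcomplete : forall s : nat -> carrier,
    (forall eps, 0 < eps -> exists N, forall m n, (N <= m)%nat -> (N <= n)%nat ->
        sqrt (Re (hinner (hadd (s m) (hopp (s n))) (hadd (s m) (hopp (s n))))) < eps) ->
    exists l, forall eps, 0 < eps -> exists N, forall n, (N <= n)%nat ->
        sqrt (Re (hinner (hadd (s n) (hopp l)) (hadd (s n) (hopp l)))) < eps
}.
Arguments hzero {_}.
Arguments hadd {_}.
Arguments hopp {_}.
Arguments hscal {_}.
Arguments hinner {_}.

Definition hnorm {H : HilbertSpace} (x : H) : R := sqrt (Re (hinner x x)).

(** * Bounded operators V -> W^*, encoded by their forms (u, w) |-> <T u, w>: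
      linear in u, antilinear in w, and bounded. *)
Definition bounded_op {V W : HilbertSpace} (T : V -> W -> Cx) : Prop :=
  (forall u1 u2 w, T (hadd u1 u2) w = Cadd (T u1 w) (T u2 w)) /\
  (forall c u w, T (hscal c u) w = Cmul c (T u w)) /\
  (forall u w1 w2, T u (hadd w1 w2) = Cadd (T u w1) (T u w2)) /\
  (forall c u w, T u (hscal c w) = Cmul (Cconj c) (T u w)) /\
  (exists K, forall u w, Cmod (T u w) <= K * hnorm u * hnorm w).

Definition is_glb (E : R -> Prop) (m : R) : Prop :=
  (forall x, E x -> m <= x) /\ (forall b, (forall x, E x -> b <= x) -> b <= m).

Definition kerB {V Q : HilbertSpace} (B : V -> Q -> Cx) (v : V) : Prop :=
  forall q, B v q = C0.
Definition orth {V : HilbertSpace} (P : V -> Prop) (w : V) : Prop :=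
  forall v, P v -> hinner w v = C0.

Definition norm_a_set {V : HilbertSpace} (a : V -> V -> Cx) (r : R) : Prop :=
  exists u v, u <> hzero /\ v <> hzero /\ r = Cmod (a u v) / (hnorm u * hnorm v).

(** inf_{u in P} sup_{v in P} |a(u,v)|/(||u|| ||v||) *)
Definition infsup_set1 {V : HilbertSpace} (P : V -> Prop) (a : V -> V -> Cx) (s : R) : Prop :=
  exists u, P u /\ u <> hzero /\
    is_lub (fun r => exists v, P v /\ v <> hzero /\
                       r = Cmod (a u v) / (hnorm u * hnorm v)) s.
(** inf_{v in P} sup_{u in P} |a(u,v)|/(||u|| ||v||) *)
Definition infsup_set2 {V : HilbertSpace} (P : V -> Prop) (a : V -> V -> Cx) (s : R) : Prop :=
  exists v, P v /\ v <> hzero /\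
    is_lub (fun r => exists u, P u /\ u <> hzero /\
                       r = Cmod (a u v) / (hnorm u * hnorm v)) s.

(** [dual_le P f M] : the functional f on the closed subspace P satisfies
    the dual norm of f on P <= M, i.e. |f v| <= M ||v|| for all v in P. *)
Definition dual_le {V : HilbertSpace} (P : V -> Prop) (f : V -> Cx) (M : R) : Prop :=
  forall v, P v -> Cmod (f v) <= M * hnorm v.

Definition in_dual {V : HilbertSpace} (P : V -> Prop) (f : V -> Cx) : Prop :=
  (forall v1 v2, P v1 -> P v2 -> f (hadd v1 v2) = Cadd (f v1) (f v2)) /\
  (forall c v, P v -> f (hscal c v) = Cmul (Cconj c) (f v)) /\
  (exists M, dual_le P f M).

(* Main.v *)
Require Import Defs.
From Stdlib Require Import Reals Lra Classical.
Open Scope R_scope.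

Lemma Cx_eq (x y : Cx) : Re x = Re y -> Im x = Im y -> x = y.
Proof. destruct x, y; simpl; intros; subst; reflexivity. Qed.

Lemma hinner_add2 {H : HilbertSpace} (x y z : H) :
  hinner x (hadd y z) = Cadd (hinner x y) (hinner x z).
Proof.
  rewrite (hinner_sym _ x (hadd y z)), (hinner_sym _ x y), (hinner_sym _ x z), hinner_add.
  apply Cx_eq; simpl; ring.
Qed.

Lemma hinner_scal2 {H : HilbertSpace} c (x y : H) :
  hinner x (hscal c y) = Cmul (Cconj c) (hinner x y).
Proof.
  rewrite (hinner_sym _ x (hscal c y)), (hinner_sym _ x y), hinner_scal.
  apply Cx_eq; simpl; ring.
Qed.

Lemma hinner_Im {H : HilbertSpace} (x : H) : Im (hinner x x) = 0.
Proof. pose proof (f_equal Im (hinner_sym _ x x)) as E; simpl in E; lra. Qed.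

Lemma pyth_core {H : HilbertSpace} (a b : H) (s t : Cx) :
  hinner a b = C0 -> hinner b a = C0 ->
  Re (hinner (hadd (hscal s a) (hscal t b)) (hadd (hscal s a) (hscal t b))) =
  (Re s ^ 2 + Im s ^ 2) * Re (hinner a a) + (Re t ^ 2 + Im t ^ 2) * Re (hinner b b).
Proof.
  intros Hab Hba.
  rewrite !hinner_add, !hinner_add2, !hinner_scal, !hinner_scal2, Hab, Hba.
  pose proof (hinner_Im a); pose proof (hinner_Im b).
  destruct (hinner a a) as [ra ia], (hinner b b) as [rb ib]; simpl in *; subst. ring.
Qed.

Lemma hnorm_ge0 {H : HilbertSpace} (x : H) : 0 <= hnorm x.
Proof. apply sqrt_pos. Qed.

Lemma hnorm_sq {H : HilbertSpace} (x : H) : hnorm x ^ 2 = Re (hinner x x).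
Proof. unfold hnorm. rewrite pow2_sqrt; auto. apply hinner_pos. Qed.

Lemma hnorm_pos {H : HilbertSpace} (x : H) : x <> hzero -> 0 < hnorm x.
Proof.
  intros Hx. unfold hnorm. apply sqrt_lt_R0.
  destruct (hinner_pos _ x) as [h|h]; auto. exfalso; apply Hx, hinner_def.
  apply Cx_eq; simpl; [lra| apply hinner_Im].
Qed.

Lemma Cmod_sq z : Cmod z ^ 2 = Re z ^ 2 + Im z ^ 2.
Proof. unfold Cmod. rewrite pow2_sqrt; auto. nra. Qed.

Lemma Cmod_ge0 z : 0 <= Cmod z.
Proof. apply sqrt_pos. Qed.

Lemma Cmod_C0 : Cmod C0 = 0.
Proof. assert (E: Re C0 ^2 + Im C0 ^2 = 0) by (simpl; ring). unfold Cmod; rewrite E; apply sqrt_0. Qed.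

Lemma Cmod_real T : 0 <= T -> Cmod (mkC T 0) = T.
Proof. intros; unfold Cmod. replace (Re (mkC T 0) ^2 + Im (mkC T 0) ^2) with (T^2) by (simpl; ring). apply sqrt_pow2; auto. Qed.

Lemma le_sqrt_bound T K : 0 <= T -> T <= K * sqrt T -> T <= K ^ 2.
Proof.
  intros HT H. destruct HT as [HT|HT]; [|subst; nra].
  pose proof (sqrt_lt_R0 _ HT). pose proof (sqrt_sqrt T (Rlt_le _ _ HT)).
  assert (sqrt T <= K) by nra. nra.
Qed.

Lemma pyth_gen {V : HilbertSpace} (g : V -> Cx) K (y0 w : V) (s t : Cx) T :
  hinner y0 w = C0 -> hinner w y0 = C0 ->
  (forall x, Cmod (g x) <= K * hnorm x) ->
  g (hadd (hscal s y0) (hscal t w)) = mkC T 0 ->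
  T = (Re s ^ 2 + Im s ^ 2) * Re (hinner y0 y0) + (Re t ^ 2 + Im t ^ 2) * Re (hinner w w) ->
  T <= K ^ 2.
Proof.
  intros H1 H2 Hb Hg HT.
  assert (T0 : 0 <= T).
  { rewrite HT. pose proof (hinner_pos _ y0); pose proof (hinner_pos _ w).
    apply Rplus_le_le_0_compat; apply Rmult_le_pos; nra. }
  apply le_sqrt_bound; auto.
  specialize (Hb (hadd (hscal s y0) (hscal t w))). rewrite Hg, Cmod_real in Hb; auto.
  unfold hnorm in Hb. rewrite pyth_core in Hb; auto. rewrite <- HT in Hb. exact Hb.
Qed.

Lemma pyth_anti {V : HilbertSpace} (g : V -> Cx) K (y0 w : V) :
  hinner y0 w = C0 -> hinner w y0 = C0 -> y0 <> hzero -> w <> hzero ->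
  (forall x y, g (hadd x y) = Cadd (g x) (g y)) ->
  (forall c x, g (hscal c x) = Cmul (Cconj c) (g x)) ->
  (forall x, Cmod (g x) <= K * hnorm x) ->
  Cmod (g y0) ^ 2 / hnorm y0 ^ 2 + Cmod (g w) ^ 2 / hnorm w ^ 2 <= K ^ 2.
Proof.
  intros H1 H2 Hy Hw Ha Hs Hb.
  pose proof (hnorm_pos _ Hy) as P0; pose proof (hnorm_pos _ Hw) as P1.
  rewrite !Cmod_sq.
  pose proof (hnorm_sq y0) as E0; pose proof (hnorm_sq w) as E1.
  set (n0 := Re (hinner y0 y0)) in *. set (n1 := Re (hinner w w)) in *.
  assert (n0 > 0) by (rewrite <- E0; nra). assert (n1 > 0) by (rewrite <- E1; nra).
  rewrite E0, E1.
  set (a := g y0). set (b := g w).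
  apply (pyth_gen g K y0 w (mkC (Re a / n0) (Im a / n0)) (mkC (Re b / n1) (Im b / n1))); auto.
  - rewrite Ha, !Hs. fold a b. apply Cx_eq; simpl; field; lra.
  - simpl. fold n0 n1. field; lra.
Qed.

Lemma pyth_lin {V : HilbertSpace} (g : V -> Cx) K (y0 w : V) :
  hinner y0 w = C0 -> hinner w y0 = C0 -> y0 <> hzero -> w <> hzero ->
  (forall x y, g (hadd x y) = Cadd (g x) (g y)) ->
  (forall c x, g (hscal c x) = Cmul c (g x)) ->
  (forall x, Cmod (g x) <= K * hnorm x) ->
  Cmod (g y0) ^ 2 / hnorm y0 ^ 2 + Cmod (g w) ^ 2 / hnorm w ^ 2 <= K ^ 2.
Proof.
  intros H1 H2 Hy Hw Ha Hs Hb.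
  pose proof (hnorm_pos _ Hy) as P0; pose proof (hnorm_pos _ Hw) as P1.
  rewrite !Cmod_sq.
  pose proof (hnorm_sq y0) as E0; pose proof (hnorm_sq w) as E1.
  set (n0 := Re (hinner y0 y0)) in *. set (n1 := Re (hinner w w)) in *.
  assert (n0 > 0) by (rewrite <- E0; nra). assert (n1 > 0) by (rewrite <- E1; nra).
  rewrite E0, E1.
  set (a := g y0). set (b := g w).
  apply (pyth_gen g K y0 w (mkC (Re a / n0) (- Im a / n0)) (mkC (Re b / n1) (- Im b / n1))); auto.
  - rewrite Ha, !Hs. fold a b. apply Cx_eq; simpl; field; lra.
  - simpl. fold n0 n1. field; lra.
Qed.

Lemma limit_lem alpha K L : 0 < alpha -> 0 <= K ->
  (forall beta, 0 < beta -> beta < alpha -> beta ^ 2 * K <= L) -> alpha ^ 2 * K <= L.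
Proof.
  intros Ha HK H. destruct (Rle_lt_dec (alpha ^ 2 * K) L) as [h|h]; auto. exfalso.
  destruct HK as [HK|HK]; [|subst; specialize (H (alpha/2)); nra].
  destruct (Rle_lt_dec L 0) as [hL|hL].
  - specialize (H (alpha/2)). assert (0 < (alpha/2)^2 * K) by (apply Rmult_lt_0_compat; nra). nra.
  - set (r := L / (alpha ^ 2 * K)).
    assert (Hr0 : 0 < r) by (unfold r; apply Rdiv_lt_0_compat; nra).
    assert (Hr1 : r < 1) by (unfold r; apply (Rmult_lt_reg_r (alpha^2*K)); [nra|]; field_simplify; nra).
    assert (HL : L = r * (alpha ^ 2 * K)) by (unfold r; field; nra).
    specialize (H (alpha * (1 + r) / 2)).
    assert (((1 + r)/2)^2 > r) by nra.
    assert (alpha^2*K*(((1 + r)/2)^2 - r) > 0) by (apply Rmult_lt_0_compat; nra).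
    nra.
Qed.

Lemma zero_self (z : Cx) : z = Cadd z z -> z = C0.
Proof. intros E. pose proof (f_equal Re E); pose proof (f_equal Im E); simpl in *. apply Cx_eq; simpl; lra. Qed.

Lemma op_zero_l {V W : HilbertSpace} (T : V -> W -> Cx) : bounded_op T -> forall w, T hzero w = C0.
Proof. intros [H1 _] w. apply zero_self. rewrite <- H1, hadd_0. reflexivity. Qed.

Lemma op_zero_r {V W : HilbertSpace} (T : V -> W -> Cx) : bounded_op T -> forall u, T u hzero = C0.
Proof. intros [_ [_ [H3 _]]] u. apply zero_self. rewrite <- H3, hadd_0. reflexivity. Qed.

Lemma orth_sym {V : HilbertSpace} (x y : V) : hinner x y = C0 -> hinner y x = C0.
Proof. intros H. rewrite hinner_sym, H. apply Cx_eq; simpl; lra. Qed.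

Lemma hnorm0 {V : HilbertSpace} : hnorm (@hzero V) = 0.
Proof.
  unfold hnorm. assert (E : hinner (@hzero V) hzero = C0).
  { apply zero_self. rewrite <- hinner_add, hadd_0. reflexivity. }
  rewrite E. simpl. apply sqrt_0.
Qed.

Theorem lemma1 (V Q : HilbertSpace) (A : V -> V -> Cx) (B : V -> Q -> Cx)
  (HA : bounded_op A) (HB : bounded_op B)
  (norma alpha : R)
  (Hnorma : is_lub (norm_a_set A) norma)
  (Halpha1 : is_glb (infsup_set1 (kerB B) A) alpha)
  (Halpha2 : is_glb (infsup_set2 (kerB B) A) alpha)
  (Hpos : 0 < alpha) :
  let V0 := kerB B in
  let V1 := orth V0 in
  let c := sqrt (norma ^ 2 / alpha ^ 2 - 1) in
  (* || A10 A00^{-1} ||_{L(V0 dual, V1 dual)} <= c *)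
  (forall f : V -> Cx, in_dual V0 f ->
     forall u : V, V0 u -> (forall v, V0 v -> A u v = f v) ->
     forall M, dual_le V0 f M -> dual_le V1 (A u) (c * M)) /\
  (* || A00^{-1} A01 ||_{L(V1, V0)} <= c *)
  (forall w : V, V1 w ->
     forall u : V, V0 u -> (forall v, V0 v -> A u v = A w v) ->
     hnorm u <= c * hnorm w) /\
  (* || A11 - A10 A00^{-1} A01 ||_{L(V1, V1 dual)} <= ||a||^2 / alpha *)
  (forall w : V, V1 w ->
     forall u : V, V0 u -> (forall v, V0 v -> A u v = A w v) ->
     dual_le V1 (fun z => Csub (A w z) (A u z)) (norma ^ 2 / alpha * hnorm w)).
Proof.
  intros V0 V1 c.
  pose proof (op_zero_l A HA) as A0l. pose proof (op_zero_r A HA) as A0r.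
  destruct HA as [HA1 [HA2 [HA3 [HA4 _]]]].
  assert (F1 : forall u v, Cmod (A u v) <= norma * hnorm u * hnorm v).
  { intros u v.
    destruct (classic (u = hzero)) as [->|Hu]; [rewrite A0l, Cmod_C0, hnorm0; lra|].
    destruct (classic (v = hzero)) as [->|Hv]; [rewrite A0r, Cmod_C0, hnorm0; lra|].
    pose proof (hnorm_pos _ Hu); pose proof (hnorm_pos _ Hv).
    assert (Cmod (A u v) / (hnorm u * hnorm v) <= norma).
    { apply (proj1 Hnorma). exists u, v; auto. }
    replace (Cmod (A u v)) with (Cmod (A u v) / (hnorm u * hnorm v) * (hnorm u * hnorm v))
      by (field; lra).
    rewrite Rmult_assoc. apply Rmult_le_compat_r; auto. nra. }
  assert (F2 : forall u, V0 u -> u <> hzero -> forall beta, beta < alpha ->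
            exists v, V0 v /\ v <> hzero /\ beta * hnorm u * hnorm v < Cmod (A u v)).
  { intros u Hu0 Hu beta Hb.
    set (E := fun r => exists v, kerB B v /\ v <> hzero /\
                       r = Cmod (A u v) / (hnorm u * hnorm v)).
    assert (Hbd : bound E).
    { exists norma. intros r [v [Hv [Hv0 ->]]]. apply (proj1 Hnorma). exists u, v; auto. }
    assert (Hne : exists r, E r) by (eexists; exists u; eauto).
    destruct (completeness E Hbd Hne) as [s Hs].
    assert (alpha <= s) by (apply (proj1 Halpha1); exists u; auto).
    destruct (classic (exists r, E r /\ beta < r)) as [[r [[v [Hv [Hv0 ->]]] Hr]]|Hno].
    - exists v; split; [|split]; auto.
      pose proof (hnorm_pos _ Hu); pose proof (hnorm_pos _ Hv0).
      apply (Rmult_lt_compat_r (hnorm u * hnorm v)) in Hr; [|nra].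
      replace (Cmod (A u v) / (hnorm u * hnorm v) * (hnorm u * hnorm v)) with (Cmod (A u v)) in Hr
        by (field; lra). lra.
    - assert (s <= beta).
      { apply (proj2 Hs). intros r Er. apply Rnot_lt_le. intro; apply Hno; eauto. }
      lra. }
  assert (F3 : forall v, V0 v -> v <> hzero -> forall beta, beta < alpha ->
            exists u, V0 u /\ u <> hzero /\ beta * hnorm u * hnorm v < Cmod (A u v)).
  { intros v Hv0 Hv beta Hb.
    set (E := fun r => exists u, kerB B u /\ u <> hzero /\
                       r = Cmod (A u v) / (hnorm u * hnorm v)).
    assert (Hbd : bound E).
    { exists norma. intros r [u [Hu [Hu0 ->]]]. apply (proj1 Hnorma). exists u, v; auto. }
    assert (Hne : exists r, E r) by (eexists; exists v; eauto).
    destruct (completeness E Hbd Hne) as [s Hs].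
    assert (alpha <= s) by (apply (proj1 Halpha2); exists v; auto).
    destruct (classic (exists r, E r /\ beta < r)) as [[r [[u [Hu [Hu0 ->]]] Hr]]|Hno].
    - exists u; split; [|split]; auto.
      pose proof (hnorm_pos _ Hu0); pose proof (hnorm_pos _ Hv).
      apply (Rmult_lt_compat_r (hnorm u * hnorm v)) in Hr; [|nra].
      replace (Cmod (A u v) / (hnorm u * hnorm v) * (hnorm u * hnorm v)) with (Cmod (A u v)) in Hr
        by (field; lra). lra.
    - assert (s <= beta).
      { apply (proj2 Hs). intros r Er. apply Rnot_lt_le. intro; apply Hno; eauto. }
      lra. }
  assert (Hex : exists y, V0 y /\ y <> hzero).
  { apply NNPP; intro Hn. destruct Halpha1 as [_ Hg].
    assert (alpha + 1 <= alpha); [|lra].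
    apply Hg. intros x [u [Hu [Hu0 _]]]. exfalso; apply Hn; eauto. }
  assert (Han : alpha <= norma).
  { destruct Hex as [y [Hy Hy0]]. apply Rnot_lt_le; intro Hlt.
    destruct (F2 y Hy Hy0 norma Hlt) as [v [_ [Hv0 Hv]]].
    specialize (F1 y v). lra. }
  assert (Hc2 : 0 <= norma ^ 2 / alpha ^ 2 - 1).
  { assert (alpha^2 <= norma^2) by nra.
    apply (Rmult_le_reg_r (alpha^2)); [nra|]. field_simplify; nra. }
  assert (K2 : forall w, V1 w -> forall u, V0 u -> (forall v, V0 v -> A u v = A w v) ->
     alpha ^ 2 * (hnorm w ^ 2 + hnorm u ^ 2) <= norma ^ 2 * hnorm w ^ 2).
  { intros w Hw u Hu Heq.
    destruct (classic (u = hzero)) as [->|Hu0].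
    { rewrite hnorm0. pose proof (hnorm_ge0 w). assert (alpha^2 <= norma^2) by nra. nra. }
    apply limit_lem; auto. { pose proof (hnorm_ge0 w); pose proof (hnorm_ge0 u); nra. }
    intros beta Hb0 Hba.
    destruct (F2 u Hu Hu0 beta Hba) as [v [Hv [Hv0 Huv]]].
    rewrite Heq in Huv; auto.
    pose proof (hnorm_pos _ Hu0); pose proof (hnorm_pos _ Hv0).
    destruct (classic (w = hzero)) as [->|Hw0].
    { rewrite A0l, Cmod_C0 in Huv. assert (0 < beta * hnorm u * hnorm v).
      { apply Rmult_lt_0_compat; nra. } lra. }
    destruct (F3 v Hv Hv0 beta Hba) as [y0 [Hy [Hy0 Hyv]]].
    pose proof (hnorm_pos _ Hy0); pose proof (hnorm_pos _ Hw0).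
    assert (P := pyth_lin (fun x => A x v) (norma * hnorm v) y0 w).
    cbv beta in P. specialize (P (orth_sym _ _ (Hw y0 Hy)) (Hw y0 Hy) Hy0 Hw0).
    specialize (P (fun x y => HA1 x y v) (fun c x => HA2 c x v)).
    specialize (P (fun x => ltac:(pose proof (F1 x v); lra))).
    set (p := hnorm y0) in *. set (q := hnorm w) in *. set (m := hnorm u) in *.
    set (n := hnorm v) in *. set (a := Cmod (A y0 v)) in *. set (b := Cmod (A w v)) in *.
    assert (Ha' : beta * n < a / p) by (apply (Rmult_lt_reg_r p); [lra|]; field_simplify; nra).
    assert (Hb' : beta * m * n / q < b / q) by (apply (Rmult_lt_reg_r q); [lra|]; field_simplify; nra).
    replace (a ^ 2 / p ^ 2 + b ^ 2 / q ^ 2) with ((a/p)^2 + (b/q)^2) in P by (field; lra).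
    assert ((beta * n)^2 <= (a/p)^2) by (apply pow_incr; nra).
    assert ((beta * m * n / q)^2 <= (b/q)^2) by (apply pow_incr; split; [apply Rlt_le, Rdiv_lt_0_compat; [repeat apply Rmult_lt_0_compat; lra | lra]|lra]).
    assert (Hf : (beta * n) ^ 2 + (beta * m * n / q) ^ 2 <= (norma * n) ^ 2) by lra.
    replace ((beta * n) ^ 2 + (beta * m * n / q) ^ 2) with (beta^2 * (q^2 + m^2) * n^2 / q^2) in Hf
      by (field; lra).
    apply (Rmult_le_compat_r (q^2 / n^2)) in Hf; [|apply Rlt_le, Rdiv_lt_0_compat; nra].
    replace (beta ^ 2 * (q ^ 2 + m ^ 2) * n ^ 2 / q ^ 2 * (q ^ 2 / n ^ 2)) with (beta ^ 2 * (q ^ 2 + m ^ 2)) in Hf by (field; lra).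
    replace ((norma * n) ^ 2 * (q ^ 2 / n ^ 2)) with (norma ^ 2 * q ^ 2) in Hf by (field; lra).
    exact Hf. }
  assert (Hcsq : c ^ 2 = norma ^ 2 / alpha ^ 2 - 1) by (unfold c; apply pow2_sqrt; auto).
  assert (Hc0 : 0 <= c) by apply sqrt_pos.
  assert (Hn0 : 0 <= norma) by lra.
  split; [|split].
  -
    intros f Hf u Hu Heq M HM z Hz.
    assert (HM0 : 0 <= M).
    { destruct Hex as [y [Hy Hy0]]. pose proof (HM y Hy). pose proof (Cmod_ge0 (f y)).
      pose proof (hnorm_pos _ Hy0). nra. }
    destruct (classic (z = hzero)) as [->|Hz0].
    { rewrite A0r, Cmod_C0, hnorm0. lra. }
    destruct (classic (u = hzero)) as [->|Hu0].
    { rewrite A0l, Cmod_C0. pose proof (hnorm_ge0 z). apply Rmult_le_pos; [apply Rmult_le_pos|]; lra. }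
    pose proof (hnorm_pos _ Hu0) as Pm. pose proof (hnorm_pos _ Hz0) as Pq.
    set (m := hnorm u) in *. set (q := hnorm z) in *.
    set (X := Cmod (A u z) / q).
    assert (HX0 : 0 <= X) by (apply Rmult_le_pos; [apply Cmod_ge0|apply Rlt_le, Rinv_0_lt_compat; lra]).
    assert (Hlim : alpha ^ 2 * (X ^ 2 + M ^ 2) <= norma ^ 2 * M ^ 2).
    { apply limit_lem; auto. { nra. }
      intros beta Hb0 Hba.
      destruct (F2 u Hu Hu0 beta Hba) as [v [Hv [Hv0 Huv]]].
      pose proof (hnorm_pos _ Hv0) as Pn. change (hnorm u) with m in Huv.
      assert (HfM := HM v Hv). rewrite <- Heq in HfM; auto.
      assert (P := pyth_anti (A u) (norma * m) v z).
      specialize (P (orth_sym _ _ (Hz v Hv)) (Hz v Hv) Hv0 Hz0).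
      specialize (P (fun x y => HA3 u x y) (fun c x => HA4 c u x)).
      specialize (P (fun x => ltac:(pose proof (F1 u x); unfold m; lra))).
      set (n := hnorm v) in *. set (a := Cmod (A u v)) in *. fold q in P.
      replace (Cmod (A u z) ^ 2 / q ^ 2) with (X ^ 2) in P by (unfold X; field; lra).
      assert (Ha' : beta * m < a / n) by (apply (Rmult_lt_reg_r n); [lra|]; replace (a / n * n) with a by (field; lra); lra).
      assert ((beta * m) ^ 2 <= (a / n) ^ 2) by (apply pow_incr; split; [apply Rmult_le_pos; lra|lra]).
      replace (a ^ 2 / n ^ 2) with ((a / n) ^ 2) in P by (field; lra).
      assert (HbM : beta * m <= M).
      { apply (Rmult_le_reg_r n); [lra|]. apply Rlt_le. lra. }
      assert (H1 : X ^ 2 <= (norma ^ 2 - beta ^ 2) * m ^ 2) by nra.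
      assert (H2 : beta ^ 2 * m ^ 2 <= M ^ 2) by (rewrite <- Rpow_mult_distr; apply pow_incr; split; [apply Rmult_le_pos|]; lra).
      assert (H3 : 0 <= norma ^ 2 - beta ^ 2) by nra.
      nra. }
    assert (HX2 : X ^ 2 <= (c * M) ^ 2).
    { rewrite Rpow_mult_distr, Hcsq. apply (Rmult_le_reg_r (alpha ^ 2)); [nra|].
      field_simplify; [|lra]. lra. }
    assert (HX : X <= c * M).
    { apply Rnot_lt_le; intro. assert (0 <= c * M) by (apply Rmult_le_pos; lra). nra. }
    replace (Cmod (A u z)) with (X * q) by (unfold X; field; lra).
    apply Rmult_le_compat_r; lra.
  -
    intros w Hw u Hu Heq. pose proof (K2 w Hw u Hu Heq) as K.
    pose proof (hnorm_ge0 w); pose proof (hnorm_ge0 u).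
    assert (hnorm u ^ 2 <= (c * hnorm w) ^ 2).
    { rewrite Rpow_mult_distr, Hcsq. apply (Rmult_le_reg_r (alpha ^ 2)); [nra|].
      field_simplify; [|lra]. lra. }
    apply Rnot_lt_le; intro. assert (0 <= c * hnorm w) by (apply Rmult_le_pos; lra). nra.
  -
    intros w Hw u Hu Heq z Hz. pose proof (K2 w Hw u Hu Heq) as K.
    set (x := hadd (hscal Defs.C1 w) (hscal (mkC (-1) 0) u)).
    assert (Ex : Csub (A w z) (A u z) = A x z).
    { unfold x. rewrite HA1, !HA2. apply Cx_eq; simpl; ring. }
    assert (Nx : hnorm x ^ 2 = hnorm w ^ 2 + hnorm u ^ 2).
    { rewrite !hnorm_sq. unfold x. rewrite pyth_core; [simpl; ring| apply Hw; auto | apply orth_sym, Hw; auto]. }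
    pose proof (hnorm_ge0 w); pose proof (hnorm_ge0 x); pose proof (hnorm_ge0 z).
    assert (Hx : hnorm x <= norma / alpha * hnorm w).
    { assert (hnorm x ^ 2 <= (norma / alpha * hnorm w) ^ 2).
      { rewrite Nx, !Rpow_mult_distr. apply (Rmult_le_reg_r (alpha ^ 2)); [nra|].
        field_simplify; [|lra]. lra. }
      apply Rnot_lt_le; intro. assert (0 <= norma / alpha * hnorm w).
      { apply Rmult_le_pos; [apply Rmult_le_pos; [lra|apply Rlt_le, Rinv_0_lt_compat; lra]|lra]. }
      nra. }
    cbv beta. rewrite Ex. eapply Rle_trans; [apply F1|].
    replace (norma ^ 2 / alpha * hnorm w * hnorm z) with (norma * (norma / alpha * hnorm w) * hnorm z)
      by (field; lra).
    apply Rmult_le_compat_r; auto. apply Rmult_le_compat_l; auto.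
Qed.
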